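(* Let $R=k[x_1,\dots,x_n]$ with the standard grading, let $G$ be a group acting on $R$ by permuting the variables, and let $I\subset R$ be a homogeneous ideal. Let $\preceq$ be a monomial order. If $G$ acts monomially on $I$ up to degree $d$ and $\mathrm{in}_{\preceq}(I)$ is generated in degrees $\le d$, then $g(\mathrm{in}_{\preceq}(I))=\mathrm{in}_{\preceq_{g^{-1}}}(I)$ for every $g\in G$.
   Context: For $h\in R$, $\mathrm{mon}(h)$ is the set of monomials appearing in $h$ with nonzero coefficient. $G$ acts monomially on $I$ up to degree $d$ if for every $h\in I$ of degree $\le d$ and every $g\in G$ there is $h'\in I$ with $\mathrm{mon}(h')=\mathrm{mon}(g(h))$. For a monomial order $\preceq$ and $g\in G$, $\preceq_g$ is the monomial order defined by $a\preceq_g b\iff g(a)\preceq g(b)$. *)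

(* Defs.v *)
From HB Require Import structures.
From mathcomp Require Import all_boot all_order all_algebra all_fingroup.
From mathcomp Require Import mpoly.
Set Implicit Arguments. Unset Strict Implicit. Unset Printing Implicit Defensive.
Import GRing.Theory.
Local Open Scope ring_scope.

Section Defs.
Context (n : nat) (k : fieldType).
Local Notation P := {mpoly k[n]}.

Definition is_ideal (I : P -> Prop) : Prop :=
  [/\ I 0, (forall f g, I f -> I g -> I (f + g)) & (forall f h, I f -> I (h * f))].

Definition ideal_gen (S : P -> Prop) (f : P) : Prop :=
  forall J, is_ideal J -> (forall s, S s -> J s) -> J f.

Definition hcomp (e : nat) (f : P) : P :=
  \sum_(m <- msupp f | mdeg m == e) f@_m *: 'X_[m].

Definition homogeneous_ideal (I : P -> Prop) : Prop :=
  is_ideal I /\ forall f e, I f -> I (hcomp e f).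

Definition deg_le (f : P) (d : nat) : Prop :=
  forall m, m \in msupp f -> (mdeg m <= d)%N.

Definition monomial_order (le : rel 'X_{1..n}) : Prop :=
  [/\ reflexive le, antisymmetric le, transitive le & total le] /\
  (forall a b c, le a b -> le (a + c)%MM (b + c)%MM) /\
  (forall a, le 0%MM a).

(* Action of a permutation g of the variables: g(x_i) = x_{g i}. *)
Definition var_perm_act (g : 'S_n) (f : P) : P := msym g f.

(* Induced action on monomials: g('X_[m]) = 'X_[mon_act g m]. *)
Definition mon_act (g : 'S_n) (m : 'X_{1..n}) : 'X_{1..n} :=
  [multinom m (invg g i) | i < n].

Definition order_twist (le : rel 'X_{1..n}) (g : 'S_n) : rel 'X_{1..n} :=
  fun a b => le (mon_act g a) (mon_act g b).

Definition is_lead (le : rel 'X_{1..n}) (f : P) (m : 'X_{1..n}) : Prop :=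
  m \in msupp f /\ forall m', m' \in msupp f -> le m' m.

Definition initial_ideal (le : rel 'X_{1..n}) (I : P -> Prop) : P -> Prop :=
  ideal_gen (fun s => exists f m, [/\ I f, f != 0, is_lead le f m & s = 'X_[m]]).

Definition acts_monomially_upto (G : {set 'S_n}) (I : P -> Prop) (d : nat) : Prop :=
  forall h g, I h -> deg_le h d -> g \in G ->
    exists h', I h' /\ msupp h' =i msupp (var_perm_act g h).

Definition generated_in_degrees_le (J : P -> Prop) (d : nat) : Prop :=
  forall f, J f <-> ideal_gen (fun s => J s /\ deg_le s d) f.

End Defs.

(* Main.v *)
Require Import Defs.
From HB Require Import structures.
From mathcomp Require Import all_boot all_order all_algebra all_fingroup.
From mathcomp Require Import mpoly.
From Stdlib Require Import ClassicalEpsilon IndefiniteDescription.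
Set Implicit Arguments. Unset Strict Implicit. Unset Printing Implicit Defensive.
Import GRing.Theory.
Local Open Scope ring_scope.

Section Aux.
Context (n : nat) (k : fieldType).
Implicit Types (a b m : 'X_{1..n}).
Local Notation P := {mpoly k[n]}.

Definition pb (Q : Prop) : bool := if excluded_middle_informative Q then true else false.
Lemma pbP Q : reflect Q (pb Q).
Proof. by rewrite /pb; case: excluded_middle_informative => h; constructor. Qed.

Section Ideal.
Variable I : P -> Prop.
Hypothesis hI : is_ideal I.

Lemma iI0 : I 0. Proof. by case: hI. Qed.
Lemma iID f g : I f -> I g -> I (f + g). Proof. by case: hI => _ h _; apply: h. Qed.
Lemma iIM f h : I f -> I (h * f). Proof. by case: hI => _ _ h'; apply: h'. Qed.
Lemma iIZ c f : I f -> I (c *: f). Proof. by move=> If; rewrite -mul_mpolyC; apply: iIM. Qed.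
Lemma iIN f : I f -> I (- f). Proof. by move=> If; rewrite -scaleN1r; apply: iIZ. Qed.
Lemma iIB f g : I f -> I g -> I (f - g). Proof. by move=> ? ?; apply: iID => //; apply: iIN. Qed.
Lemma iIsum (T : Type) (r : seq T) (Q : pred T) (F : T -> P) :
  (forall i, Q i -> I (F i)) -> I (\sum_(i <- r | Q i) F i).
Proof. by move=> h; apply: big_ind => //; [apply: iI0 | apply: iID]. Qed.
End Ideal.

Lemma ideal_gen_ideal (S : P -> Prop) : is_ideal (ideal_gen S).
Proof.
split.
- by move=> J hJ _; apply: iI0.
- by move=> f g hf hg J hJ hS; apply: iID => //; [apply: hf | apply: hg].
- by move=> f h hf J hJ hS; apply: iIM => //; apply: hf.
Qed.

Lemma ideal_gen_sub (S : P -> Prop) J f : is_ideal J -> (forall s, S s -> J s) -> ideal_gen S f -> J f.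
Proof. by move=> hJ hS hf; apply: hf. Qed.

Lemma ideal_gen_in (S : P -> Prop) s : S s -> ideal_gen S s.
Proof. by move=> hs J _ h; apply: h. Qed.

Lemma mon_actD g a b : mon_act g (a + b)%MM = (mon_act g a + mon_act (g : 'S_n) b)%MM.
Proof. by apply/mnmP => i; rewrite /mon_act !mnmE. Qed.
Lemma mon_act0 g : mon_act (g : 'S_n) 0%MM = 0%MM.
Proof. by apply/mnmP => i; rewrite /mon_act !mnmE. Qed.
Lemma mon_actK (g : 'S_n) : cancel (mon_act g) (mon_act (g^-1)%g).
Proof. by move=> m; apply/mnmP => i; rewrite /mon_act !mnmE invgK permK. Qed.
Lemma mon_actKV (g : 'S_n) : cancel (mon_act (g^-1)%g) (mon_act g).
Proof. by move=> m; apply/mnmP => i; rewrite /mon_act !mnmE invgK permKV. Qed.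
Lemma mon_act_inj (g : 'S_n) : injective (mon_act g).
Proof. exact: can_inj (mon_actK g). Qed.
Lemma mdeg_act (g : 'S_n) m : mdeg (mon_act g m) = mdeg m.
Proof. by rewrite /mon_act mdeg_mperm. Qed.
Lemma msym_X (g : 'S_n) m : var_perm_act g ('X_[m] : P) = 'X_[mon_act g m].
Proof. by rewrite /var_perm_act msymX. Qed.
Lemma mcoeff_act (g : 'S_n) (p : P) m : (var_perm_act g p)@_m = p@_(mon_act (g^-1)%g m).
Proof. rewrite /var_perm_act mcoeff_sym; congr mcoeff; apply/mnmP => i; by rewrite /mon_act !mnmE invgK. Qed.
Lemma msupp_act (g : 'S_n) (p : P) m : (m \in msupp (var_perm_act g p)) = (mon_act (g^-1)%g m \in msupp p).
Proof. by rewrite !mcoeff_msupp mcoeff_act. Qed.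

Lemma twist_mo le (h : 'S_n) : monomial_order le -> monomial_order (order_twist le h).
Proof.
case=> [[r a t to] [ad z]]; split; [split|split].
- by move=> x; apply: r.
- by move=> x y /a /mon_act_inj.
- by move=> x y z'; apply: t.
- by move=> x y; apply: to.
- by move=> x y c; rewrite /order_twist !mon_actD; apply: ad.
- by move=> x; rewrite /order_twist mon_act0; apply: z.
Qed.


Section Lead.
Variable le : rel 'X_{1..n}.
Hypothesis mo : monomial_order le.

Lemma le_refl : reflexive le. Proof. by case: mo => [[]]. Qed.
Lemma le_anti : antisymmetric le. Proof. by case: mo => [[]]. Qed.
Lemma le_trans : transitive le. Proof. by case: mo => [[]]. Qed.
Lemma le_total : total le. Proof. by case: mo => [[]]. Qed.
Lemma le_add a b c : le a b -> le (a + c)%MM (b + c)%MM. Proof. by case: mo => _ [h _]; apply: h. Qed.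

Lemma seq_max (s : seq 'X_{1..n}) : s != [::] -> exists2 m, m \in s & forall m', m' \in s -> le m' m.
Proof.
elim: s => // x s IH _.
case: s IH => [|y s] IH.
  exists x; first by rewrite mem_seq1.
  by move=> m'; rewrite mem_seq1 => /eqP ->; apply: le_refl.
have [//|m ms hm] := IH.
case/orP: (le_total x m) => hxm.
  exists m; first by rewrite inE ms orbT.
  by move=> m'; rewrite inE => /orP [/eqP ->|]; [|apply: hm].
exists x; first by rewrite inE eqxx.
move=> m'; rewrite inE => /orP [/eqP ->|/hm h]; first by apply: le_refl.
exact: le_trans h hxm.
Qed.

Lemma lead_exists (f : P) : f != 0 -> exists m, is_lead le f m.
Proof.
move=> nz; have [|m ms hm] := seq_max (s := msupp f); last by exists m.
by rewrite msupp_eq0.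
Qed.

Lemma lead_uniq (f : P) m1 m2 : is_lead le f m1 -> is_lead le f m2 -> m1 = m2.
Proof. by case=> h1 H1 [h2 H2]; apply: le_anti; rewrite H1 ?H2. Qed.

Variable I : P -> Prop.

Definition Lm m := exists f, I f /\ is_lead le f m.

Lemma Lm_up m c : is_ideal I -> Lm m -> Lm (m + c)%MM.
Proof.
move=> hI [f [If [ms hm]]]; exists (f * 'X_[c]); split.
  by rewrite mulrC; apply: iIM.
split.
  by rewrite mcoeff_msupp addmC mcoeffMX -mcoeff_msupp.
move=> m'; rewrite (perm_mem (msuppMX _ _)) => /mapP [m'' /hm h ->].
by rewrite addmC; apply: le_add.
Qed.

Lemma Lm_init m : Lm m -> initial_ideal le I 'X_[m].
Proof.
move=> [f [If hl]]; apply: ideal_gen_in; exists f, m; split => //.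
by apply/eqP => f0; case: hl; rewrite f0 msupp0.
Qed.

Lemma init_char (p : P) : is_ideal I -> initial_ideal le I p ->
  forall m, m \in msupp p -> exists m0, Lm m0 /\ (m0 <= m)%MM.
Proof.
move=> hI hp; apply: (@ideal_gen_sub _ (fun p => forall m, m \in msupp p -> exists m0, Lm m0 /\ (m0 <= m)%MM)) hp.
- split.
  + by move=> m; rewrite msupp0.
  + move=> f g hf hg m /msuppD_le; rewrite mem_cat => /orP [/hf|/hg] //.
  + move=> f h hf m /msuppM_le /allpairsP [[m1 m2] /= [_ /hf [m0 [L0 le0]] ->]].
    exists m0; split => //; apply: lepm_trans le0 _; exact: lem_addl.
- move=> s [f [m [If nz hl ->]]] m'; rewrite msuppX mem_seq1 => /eqP ->.
  by exists m; split; [exists f|exact: lepm_refl].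
Qed.

Lemma init_X m : is_ideal I -> initial_ideal le I 'X_[m] -> Lm m.
Proof.
move=> hI /(init_char hI) h; have [|m0 [L0 le0]] := h m.
  by rewrite msuppX mem_seq1.
by rewrite -(submK le0) addmC; apply: Lm_up.
Qed.

End Lead.

Lemma mcoeff_hcomp e (f : P) m : (hcomp e f)@_m = if mdeg m == e then f@_m else 0.
Proof.
rewrite /hcomp raddf_sum /= big_mkcond /=.
have [mf|mf] := boolP (m \in msupp f).
  rewrite (bigD1_seq m) //= mcoeffZ mcoeffX eqxx mulr1 big1 ?addr0.
    by case: ifP.
  by move=> i /negbTE ne; case: ifP => // _; rewrite mcoeffZ mcoeffX ne mulr0.
rewrite memN_msupp_eq0 // if_same big_seq big1 // => i im.
case: ifP => // _; rewrite mcoeffZ mcoeffX.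
by case: eqP => [ei|]; [rewrite -ei im in mf| rewrite mulr0].
Qed.

Lemma msupp_hcomp e (f : P) m : (m \in msupp (hcomp e f)) = (mdeg m == e) && (m \in msupp f).
Proof. by rewrite !mcoeff_msupp mcoeff_hcomp; case: ifP; rewrite ?eqxx. Qed.

Lemma Lm_hom le I m : homogeneous_ideal I -> Lm le I m ->
  exists f, [/\ I f, is_lead le f m & forall m', m' \in msupp f -> mdeg m' = mdeg m].
Proof.
move=> [hI hh] [f [If [ms hm]]]; exists (hcomp (mdeg m) f); split.
- exact: hh.
- split; first by rewrite msupp_hcomp eqxx.
  by move=> m'; rewrite msupp_hcomp => /andP [_ /hm].
- by move=> m'; rewrite msupp_hcomp => /andP [/eqP].
Qed.

Section Forward.
Variables (G : {group 'S_n}) (I : P -> Prop) (le : rel 'X_{1..n}) (d : nat).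
Hypotheses (hom : homogeneous_ideal I) (mo : monomial_order le)
  (acts : acts_monomially_upto G I d) (gen : generated_in_degrees_le (initial_ideal le I) d).

Lemma Lm_act g m : g \in G -> Lm le I m -> (mdeg m <= d)%N ->
  Lm (order_twist le (g^-1)%g) I (mon_act g m).
Proof.
move=> gG Lm0 md; have [f [If [ms hm] hd]] := Lm_hom hom Lm0.
have [|h' [Ih' eh']] := acts If _ gG.
  by move=> m' /hd ->.
exists h'; split => //; split.
  by rewrite eh' msupp_act mon_actK.
by move=> m'; rewrite eh' msupp_act => /hm; rewrite /order_twist mon_actK.
Qed.

Lemma forward g f0 : g \in G -> initial_ideal le I f0 ->
  initial_ideal (order_twist le (g^-1)%g) I (var_perm_act g f0).
Proof.
move=> gG hf00; have hf0 := (gen f0).1 hf00.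
have iI' := ideal_gen_ideal (fun s => exists f m, [/\ I f, f != 0, is_lead (order_twist le (g^-1)%g) f m & s = 'X_[m]]).
apply: (hf0 (fun p => initial_ideal (order_twist le (g^-1)%g) I (var_perm_act g p))).
- split.
  + by rewrite /var_perm_act msym0; apply: (iI0 iI').
  + by move=> f h hf hh; rewrite /var_perm_act msymD; apply: (iID iI').
  + by move=> f h hf; rewrite /var_perm_act msymM; apply: (iIM iI').
- move=> s [hs degs]; rewrite (mpolyE s) /var_perm_act raddf_sum /= big_seq.
  apply: (iIsum iI') => m ms; rewrite msymZ; apply: (iIZ iI').
  have [m0 [L0 le0]] := init_char hom.1 hs ms.
  have md : (mdeg m0 <= d)%N.
    by apply: leq_trans (degs _ ms); rewrite -(submK le0) mdegD leq_addl.
  have := Lm_init (Lm_act gG L0 md).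
  rewrite msymX -/(mon_act g m) -(submK le0) mon_actD mpolyXD.
  by move=> h0; apply: (iIM iI').
Qed.
End Forward.


Lemma coef_sumX p (f : 'I_p -> 'X_{1..n}) (c : 'I_p -> k) j0 : injective f ->
  (\sum_j c j *: 'X_[f j] : P)@_(f j0) = c j0.
Proof.
move=> inj; rewrite raddf_sum (bigD1 j0) //= mcoeffZ mcoeffX eqxx mulr1 big1 ?addr0 //.
by move=> j ne; rewrite mcoeffZ mcoeffX (inj_eq inj) (negbTE ne) mulr0.
Qed.

Lemma coef_sumX0 p (f : 'I_p -> 'X_{1..n}) (c : 'I_p -> k) u : (forall j, f j == u = false) ->
  (\sum_j c j *: 'X_[f j] : P)@_u = 0.
Proof. by move=> h; rewrite raddf_sum big1 // => j _ /=; rewrite mcoeffZ mcoeffX h mulr0. Qed.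

Lemma expand_on q (yb : 'I_q -> 'X_{1..n}) (r : P) : injective yb ->
  (forall m, m \in msupp r -> exists j, m = yb j) -> r = \sum_j r@_(yb j) *: 'X_[yb j].
Proof.
move=> iy h; apply/mpolyP => u.
case: (pickP (fun j => yb j == u)) => [j /eqP <-|nj].
  by rewrite coef_sumX.
rewrite coef_sumX0 //; apply: memN_msupp_eq0; apply/negP => /h [j e].
by have := nj j; rewrite e eqxx.
Qed.

Lemma steinitz (I : P -> Prop) p q (xb : 'I_p -> 'X_{1..n}) (yb : 'I_q -> 'X_{1..n}) :
  is_ideal I -> injective yb ->
  (forall lam : 'I_p -> k, (exists i, lam i != 0) -> ~ I (\sum_i lam i *: 'X_[xb i])) ->
  (forall i, exists r, I ('X_[xb i] - r) /\ forall m, m \in msupp r -> exists j, m = yb j) ->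
  (p <= q)%N.
Proof.
move=> hI iy ind span.
have [R hR] := functional_choice _ span.
rewrite leqNgt; apply/negP => lt.
pose M : 'M[k]_(p, q) := \matrix_(i, j) (R i)@_(yb j).
have : kermx M != 0.
  rewrite -mxrank_eq0 mxrank_ker subn_eq0 -ltnNge.
  exact: leq_ltn_trans (rank_leq_col M) lt.
case: (pickP (fun ij : 'I_p * 'I_p => kermx M ij.1 ij.2 != 0)) => [[i0 j0] /= nz|none]; last first.
  move/negP; apply; apply/eqP/matrixP => i j; rewrite [RHS]mxE.
  by have := none (i, j); rewrite /= => /negbFE/eqP.
move=> _.
pose lam := fun i => kermx M i0 i.
apply: (ind lam); first by exists j0.
have E : \sum_i lam i *: ('X_[xb i] : P) = \sum_i lam i *: ('X_[xb i] - R i) + \sum_i lam i *: R i.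
  by rewrite -big_split /=; apply: eq_bigr => i _; rewrite -scalerDr subrK.
have Z : \sum_i lam i *: R i = 0.
  transitivity (\sum_i \sum_j (lam i * (R i)@_(yb j)) *: ('X_[yb j] : P)).
    apply: eq_bigr => i _; rewrite {1}(expand_on iy (hR i).2) scaler_sumr.
    by apply: eq_bigr => j _; rewrite scalerA.
  rewrite exchange_big /=; apply: big1 => j _; rewrite -scaler_suml.
  have := congr1 (fun A : 'M_(p, q) => A i0 j) (mulmx_ker M).
  rewrite /= [in X in X = _ -> _]mxE [in X in _ = X -> _]mxE => h.
  suff -> : \sum_i lam i * (R i)@_(yb j) = 0 by rewrite scale0r.
  rewrite -[RHS]h; apply: eq_bigr => i _; rewrite /lam [M _ _]mxE; done.
rewrite E Z addr0; apply: (iIsum hI) => i _; apply: (iIZ hI); exact: (hR i).1.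
Qed.


Section Span.
Variables (I : P -> Prop) (le : rel 'X_{1..n}) (e : nat).
Hypotheses (hom : homogeneous_ideal I) (mo : monomial_order le).

Let N u := #|[set v : 'X_{1..n < e.+1} | le v u]|.

Lemma N_lt v u : mdeg u = e -> le v u -> v != u -> (N v < N u)%N.
Proof.
move=> du lvu ne; apply: proper_card; apply/properP; split.
  apply/subsetP => w; rewrite !inE => h; move: (le_trans mo h lvu); done.
have hu : (mdeg u < e.+1)%N by rewrite du.
exists (BMultinom hu); rewrite !inE /= ?le_refl //.
apply/negP => luv; move/negP: ne; apply; apply/eqP/(le_anti mo); by rewrite lvu luv.
Qed.

Lemma span_std u : mdeg u = e -> exists r, I ('X_[u] - r) /\
  forall m, m \in msupp r -> mdeg m = e /\ ~ Lm le I m.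
Proof.
have hI := hom.1.
suff H : forall N0 u, (N u < N0)%N -> mdeg u = e -> exists r, I ('X_[u] - r) /\
  forall m, m \in msupp r -> mdeg m = e /\ ~ Lm le I m by apply: H (ltnSn _).
elim => // N0 IH {}u ltN du.
case: (excluded_middle_informative (Lm le I u)) => [Lu|nLu]; last first.
  exists 'X_[u]; rewrite subrr; split; first exact: iI0.
  by move=> m; rewrite msuppX mem_seq1 => /eqP ->.
have [f [If [us hm] hd]] := Lm_hom hom Lu.
pose c := f@_u.
have cn : c != 0 by rewrite -mcoeff_msupp.
pose qq := 'X_[u] - c^-1 *: f.
have qsupp : forall m, m \in msupp qq -> m \in msupp f /\ m != u.
  move=> m; rewrite mcoeff_msupp mcoeffB mcoeffZ mcoeffX.
  case: (eqVneq u m) => [<-|ne]; first by rewrite mulVf // subrr eqxx.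
  rewrite sub0r oppr_eq0 mulf_eq0 invr_eq0 (negbTE cn) /= => fm.
  split; first by rewrite mcoeff_msupp.
  by [].
have IHm : forall m, exists r, m \in msupp qq -> I ('X_[m] - r) /\
    (forall m', m' \in msupp r -> mdeg m' = e /\ ~ Lm le I m').
  move=> m; case: (boolP (m \in msupp qq)) => [mq|]; last by exists 0.
  have [mf ne] := qsupp _ mq.
  have dm : mdeg m = e by rewrite hd // du.
  have [|r hr] := IH m _ dm; last by exists r.
  by apply: leq_trans (N_lt du (hm _ mf) ne) _; rewrite -ltnS.
have [Rf hR] := functional_choice _ IHm.
exists (\sum_(m <- msupp qq) qq@_m *: Rf m); split.
  have -> : 'X_[u] - \sum_(m <- msupp qq) qq@_m *: Rf m =
      c^-1 *: f + \sum_(m <- msupp qq) qq@_m *: ('X_[m] - Rf m).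
    under [in RHS]eq_bigr do rewrite scalerBr.
    by rewrite sumrB -mpolyE /qq addrA (addrC (c^-1 *: f)) subrK.
  apply: (iID hI); first exact: (iIZ hI).
  rewrite big_seq; apply: (iIsum hI) => m mq; apply: (iIZ hI); exact: (hR m mq).1.
move=> m /msupp_sum_le/flattenP [s /mapP [m' m'in ->] ms].
move: m'in; rewrite mem_filter /= => m'q.
exact: (hR m' m'q).2 _ (msuppZ_le ms).
Qed.
End Span.


Section Count.
Variables (G : {group 'S_n}) (I : P -> Prop) (le : rel 'X_{1..n}) (d : nat).
Hypotheses (hom : homogeneous_ideal I) (mo : monomial_order le)
  (acts : acts_monomially_upto G I d) (gen : generated_in_degrees_le (initial_ideal le I) d).
Variables (g : 'S_n) (gG : g \in G).
Let le' := order_twist le (g^-1)%g.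
Let mo' : monomial_order le' := twist_mo _ mo.

Lemma forward_L w : Lm le I w -> Lm le' I (mon_act g w).
Proof.
move=> /Lm_init h; have := forward hom acts gen gG h.
rewrite msym_X; exact: init_X hom.1.
Qed.

Local Notation Aset l e := {v : 'X_{1..n < e.+1} | (mdeg v == e) && ~~ pb (Lm l I v)}.

Lemma backward_L u : Lm le' I u -> Lm le I (mon_act (g^-1)%g u).
Proof.
move=> Lu.
case: (excluded_middle_informative (Lm le I (mon_act (g^-1)%g u))) => // nL; exfalso.
pose e := mdeg u.
pose xb := fun i : 'I_#|{: Aset le e}| => bmnm (val (enum_val i)).
pose yb := fun i : 'I_#|{: Aset le' e}| => bmnm (val (enum_val i)).
have xinj : injective xb.
  by move=> i j /val_inj /val_inj /enum_val_inj.
have yinj : injective yb.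
  by move=> i j /val_inj /val_inj /enum_val_inj.
have AB : (#|{: Aset le e}| <= #|{: Aset le' e}|)%N.
  apply: (steinitz (I := I) (xb := xb) (yb := yb) hom.1 yinj).
  - move=> lam [i0 nz] Ip.
    pose pp := \sum_i lam i *: ('X_[xb i] : P).
    have : pp != 0.
      apply: contra_neq nz => p0.
      by rewrite -(coef_sumX lam i0 xinj) -/pp p0 mcoeff0.
    case/(lead_exists mo) => m [ms hm].
    case: (pickP (fun j => xb j == m)) => [j /eqP xj|nj]; last first.
      by move: ms; rewrite mcoeff_msupp coef_sumX0 ?eqxx.
    have := valP (enum_val j); rewrite /= => /andP [_ /pbP]; apply.
    by exists pp; split => //; split; rewrite -/(xb j) xj.
  - move=> i.
    have di : mdeg (xb i) = e by have := valP (enum_val i); case/andP => /eqP.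
    have [r [Ir hr]] := span_std hom mo' di.
    exists r; split => // m ms.
    have [dm nLm] := hr m ms.
    have hb : (mdeg m < e.+1)%N by rewrite dm.
    have hB : (mdeg (BMultinom hb) == e) && ~~ pb (Lm le' I (BMultinom hb)).
      by rewrite /= dm eqxx /=; apply/negP => /pbP.
    exists (enum_rank (exist _ (BMultinom hb) hB : (Aset le' e))).
    by rewrite /yb enum_rankK.
have phi_deg : forall b : (Aset le' e), (mdeg (mon_act (g^-1)%g (bmnm (val b))) < e.+1)%N.
  by move=> b; rewrite mdeg_act; have := valP b; case/andP => /eqP ->.
have phi_prop : forall b : (Aset le' e), (mdeg (BMultinom (phi_deg b)) == e) && ~~ pb (Lm le I (BMultinom (phi_deg b))).
  move=> b; have := valP b; case/andP => /eqP db nb.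
  rewrite /= mdeg_act db eqxx /=; apply/negP => /pbP /forward_L.
  rewrite mon_actKV => h; move/negP: nb; apply; exact/pbP.
pose phi := fun b : (Aset le' e) => (exist _ (BMultinom (phi_deg b)) (phi_prop b) : (Aset le e)).
have phiinj : injective phi.
  move=> b1 b2 /(congr1 (fun a : (Aset le e) => bmnm (val a))) /= /mon_act_inj.
  by move/val_inj/val_inj.
have hu : (mdeg (mon_act (g^-1)%g u) < e.+1)%N by rewrite mdeg_act.
have hA : (mdeg (BMultinom hu) == e) && ~~ pb (Lm le I (BMultinom hu)).
  by rewrite /= mdeg_act eqxx /=; apply/negP => /pbP.
have := inj_card_onto phiinj AB (exist _ (BMultinom hu) hA : (Aset le e)).
case/codomP => b /(congr1 (fun a : (Aset le e) => bmnm (val a))) /= /mon_act_inj ub.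
have := valP b; case/andP => _ /pbP; apply; by rewrite -ub.
Qed.
End Count.

End Aux.

Unset Implicit Arguments.

Theorem mainTheorem10 (n : nat) (k : fieldType) (G : {group 'S_n})
  (I : {mpoly k[n]} -> Prop) (le : rel 'X_{1..n}) (d : nat) :
  homogeneous_ideal I ->
  monomial_order le ->
  acts_monomially_upto G I d ->
  generated_in_degrees_le (initial_ideal le I) d ->
  forall g, g \in G ->
    forall f : {mpoly k[n]},
      (exists f0, initial_ideal le I f0 /\ f = var_perm_act g f0) <->
      initial_ideal (order_twist le (invg g)) I f.
Proof.
move=> hom mo acts gen g gG f; split.
  by case=> f0 [hf0 ->]; apply: (forward hom acts gen gG hf0).
move=> hf; exists (var_perm_act (g^-1)%g f); split; last first.
  by rewrite /var_perm_act -msymMm mulVg msym1m.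
have iI : is_ideal (initial_ideal le I) := ideal_gen_ideal _.
apply: (hf (fun p => initial_ideal le I (var_perm_act (g^-1)%g p))).
- split.
  + by rewrite /var_perm_act msym0; apply: (iI0 iI).
  + by move=> f1 h hf1 hh; rewrite /var_perm_act msymD; apply: (iID iI).
  + by move=> f1 h hf1; rewrite /var_perm_act msymM; apply: (iIM iI).
- move=> s [f' [m [If' nz hl ->]]]; rewrite msym_X; apply: Lm_init.
  by apply: (backward_L hom mo acts gen gG); exists f'.
Qed.
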